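(* Consider Configuration II (two agents in mutual beacon-referenced pursuit of a single beacon at the origin, $b=0$) with parameters $\mu>0$, $\lambda\in(0,1)$, $a\in[-1,1]$ and $a_0=0$. A circling equilibrium exists if and only if $a<0$, and at a circling equilibrium the shape variables satisfy $$\bar x_1=\bar x_2=0,\quad \bar x_{1b1}=\bar x_{2b2}=0,\quad \tilde x=-1,\quad \rho=\frac{2}{(1-\lambda)\mu(-a)},\quad \rho_{1b1}=\rho_{2b2}.$$
   Context: Two-agent setup: beacons $\mathbf r_{b1}=(0,0,-b)$, $\mathbf r_{b2}=(0,0,b)$ with $b\ge0$, $\hat{\mathbf b}=\mathbf r_{b2}-\mathbf r_{b1}=(0,0,2b)$. Agents $i=1,2$ have positions $\mathbf r_i\in\mathbb R^3$ and unit velocities $\mathbf x_i$. Let $\mathbf r=\mathbf r_1-\mathbf r_2$, $\mathbf r_{1b1}=\mathbf r_1-\mathbf r_{b1}$, $\mathbf r_{2b2}=\mathbf r_2-\mathbf r_{b2}$, $\rho=|\mathbf r|$, $\rho_{1b1}=|\mathbf r_{1b1}|$, $\rho_{2b2}=|\mathbf r_{2b2}|$, $\bar x_1=\mathbf x_1\cdot\mathbf r/\rho$, $\bar x_2=-\mathbf x_2\cdot\mathbf r/\rho$, $\bar x_{1b1}=\mathbf x_1\cdot\mathbf r_{1b1}/\rho_{1b1}$, $\bar x_{2b2}=\mathbf x_2\cdot\mathbf r_{2b2}/\rho_{2b2}$, $\tilde x=\mathbf x_1\cdot\mathbf x_2$, $\hat r_i=\mathbf r_i\cdot\hat{\mathbf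 b}$, $\hat x_i=\mathbf x_i\cdot\hat{\mathbf b}$. With gain $\mu>0$, weight $\lambda\in(0,1)$, common agent-bearing parameter $a\in[-1,1]$ and common beacon-bearing parameter $a_0\in[-1,1]$, the closed-loop dynamics are $\dot{\mathbf r}_i=\mathbf x_i$ and $$\dot{\mathbf x}_1=-(1-\lambda)\mu(\bar x_1-a)\Bigl(\tfrac{\mathbf r}{\rho}-\bar x_1\mathbf x_1\Bigr)-\lambda\mu(\bar x_{1b1}-a_0)\Bigl(\tfrac{\mathbf r_{1b1}}{\rho_{1b1}}-\bar x_{1b1}\mathbf x_1\Bigr),$$ $$\dot{\mathbf x}_2=-(1-\lambda)\mu(\bar x_2-a)\Bigl(-\tfrac{\mathbf r}{\rho}-\bar x_2\mathbf x_2\Bigr)-\lambda\mu(\bar x_{2b2}-a_0)\Bigl(\tfrac{\mathbf r_{2b2}}{\rho_{2b2}}-\bar x_{2b2}\mathbf x_2\Bigr).$$ The shape variables $(\bar x_1,\bar x_2,\bar x_{1b1},\bar x_{2b2},\tilde x,\rho,\rho_{1b1},\rho_{2b2},\hat r_1,\hat r_2,\hat x_1,\hat x_2)$ have time derivatives along this flow that depend only on the shape variables. A circling equilibrium is a state with $\rho,\rho_{1b1},\rho_{2b2}>0$ at which the time derivatives of all shape variables vanish. Configuration II is the case $b=0$ (single beacon at the origin, so $\hat{\mathbf b}=\mathbf 0$ and $\hat r_i=\hat x_i=0$). *)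

(* Defs.v *)
From Stdlib Require Import Reals Lra.
Open Scope R_scope.

Record V3 := mkV3 { vx : R; vy : R; vz : R }.

Definition vadd (u v : V3) : V3 := mkV3 (vx u + vx v) (vy u + vy v) (vz u + vz v).
Definition vsub (u v : V3) : V3 := mkV3 (vx u - vx v) (vy u - vy v) (vz u - vz v).
Definition vscale (c : R) (v : V3) : V3 := mkV3 (c * vx v) (c * vy v) (c * vz v).
Definition vopp (v : V3) : V3 := vscale (-1) v.
Definition vdot (u v : V3) : R := vx u * vx v + vy u * vy v + vz u * vz v.
Definition vnorm (v : V3) : R := sqrt (vdot v v).

(* Full state of the two-agent system: positions r1 r2, unit velocities x1 x2 *)
Record State := mkState { r1 : V3; r2 : V3; x1 : V3; x2 : V3 }.

Definition st_add (s t : State) : State :=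
  mkState (vadd (r1 s) (r1 t)) (vadd (r2 s) (r2 t)) (vadd (x1 s) (x1 t)) (vadd (x2 s) (x2 t)).
Definition st_scale (c : R) (s : State) : State :=
  mkState (vscale c (r1 s)) (vscale c (r2 s)) (vscale c (x1 s)) (vscale c (x2 s)).

Section Model.
Variable b : R.

Definition rb1 : V3 := mkV3 0 0 (- b).
Definition rb2 : V3 := mkV3 0 0 b.
Definition bhat : V3 := vsub rb2 rb1.

Definition rrel (s : State) : V3 := vsub (r1 s) (r2 s).
Definition r1b1 (s : State) : V3 := vsub (r1 s) rb1.
Definition r2b2 (s : State) : V3 := vsub (r2 s) rb2.

Definition rho (s : State) : R := vnorm (rrel s).
Definition rho1b1 (s : State) : R := vnorm (r1b1 s).
Definition rho2b2 (s : State) : R := vnorm (r2b2 s).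
Definition xbar1 (s : State) : R := vdot (x1 s) (rrel s) / rho s.
Definition xbar2 (s : State) : R := - vdot (x2 s) (rrel s) / rho s.
Definition xbar1b1 (s : State) : R := vdot (x1 s) (r1b1 s) / rho1b1 s.
Definition xbar2b2 (s : State) : R := vdot (x2 s) (r2b2 s) / rho2b2 s.
Definition xtilde (s : State) : R := vdot (x1 s) (x2 s).
Definition rhat1 (s : State) : R := vdot (r1 s) bhat.
Definition rhat2 (s : State) : R := vdot (r2 s) bhat.
Definition xhat1 (s : State) : R := vdot (x1 s) bhat.
Definition xhat2 (s : State) : R := vdot (x2 s) bhat.

Definition shape_vars : list (State -> R) :=
  xbar1 :: xbar2 :: xbar1b1 :: xbar2b2 :: xtilde :: rho :: rho1b1 :: rho2b2
  :: rhat1 :: rhat2 :: xhat1 :: xhat2 :: nil.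

Variables (mu lambda a a0 : R).

(* closed-loop vector field: (r1', r2', x1', x2') *)
Definition field (s : State) : State :=
  mkState (x1 s) (x2 s)
    (vadd
      (vscale (- (1 - lambda) * mu * (xbar1 s - a))
         (vsub (vscale (/ rho s) (rrel s)) (vscale (xbar1 s) (x1 s))))
      (vscale (- lambda * mu * (xbar1b1 s - a0))
         (vsub (vscale (/ rho1b1 s) (r1b1 s)) (vscale (xbar1b1 s) (x1 s)))))
    (vadd
      (vscale (- (1 - lambda) * mu * (xbar2 s - a))
         (vsub (vscale (- / rho s) (rrel s)) (vscale (xbar2 s) (x2 s))))
      (vscale (- lambda * mu * (xbar2b2 s - a0))
         (vsub (vscale (/ rho2b2 s) (r2b2 s)) (vscale (xbar2b2 s) (x2 s))))).

(* the time derivative of the function f along the flow at state s is zero: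
   d/dt f(s + t * field s) at t = 0 equals 0 (chain rule: this is the
   time derivative along any trajectory passing through s) *)
Definition deriv_vanishes (f : State -> R) (s : State) : Prop :=
  derivable_pt_lim (fun t => f (st_add s (st_scale t (field s)))) 0 0.

Definition circling_equilibrium (s : State) : Prop :=
  vnorm (x1 s) = 1 /\ vnorm (x2 s) = 1 /\
  0 < rho s /\ 0 < rho1b1 s /\ 0 < rho2b2 s /\
  (forall f, List.In f shape_vars -> deriv_vanishes f s).

End Model.

(* Main.v *)
From Coquelicot Require Import Coquelicot.
Require Import Defs.
From Stdlib Require Import Reals Lra Psatz.
Open Scope R_scope.

Lemma D_dot u v w z : is_derive (fun t => vdot (vadd u (vscale t v)) (vadd w (vscale t z))) 0 (vdot u z + vdot v w).
Proof. destruct u,v,w,z; unfold vdot,vadd,vscale; simpl. auto_derive. easy. ring. Qed.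

Lemma D_norm u v : 0 < vnorm u -> is_derive (fun t => vnorm (vadd u (vscale t v))) 0 (vdot u v / vnorm u).
Proof. destruct u,v; unfold vnorm, vdot,vadd,vscale; simpl. intros H. auto_derive.
- rewrite !Rmult_0_l, !Rplus_0_r.
  destruct (Rle_lt_dec (vx * vx + vy * vy + vz * vz) 0) as [h|h]; auto.
  rewrite sqrt_neg_0 in H; lra.
- rewrite !Rmult_0_l, !Rplus_0_r. field. lra.
Qed.

Definition P s d (t : R) := st_add s (st_scale t d).

Lemma uniq0 (F : R -> R) D : derivable_pt_lim F 0 0 -> is_derive F 0 D -> D = 0.
Proof. intros H1 H2. apply is_derive_Reals in H1.
  apply is_derive_unique in H1. apply is_derive_unique in H2. congruence. Qed.

Lemma rrel_P s d t : rrel (P s d t) = vadd (rrel s) (vscale t (rrel d)).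
Proof. destruct s as [[] [] [] []], d as [[] [] [] []]; unfold P, rrel, vsub, vadd, vscale, st_add, st_scale; simpl; f_equal; ring. Qed.
Lemma r1b1_P b s d t : r1b1 b (P s d t) = vadd (r1b1 b s) (vscale t (r1 d)).
Proof. destruct s as [[] [] [] []], d as [[] [] [] []]; unfold P, r1b1, vsub, vadd, vscale, st_add, st_scale; simpl; f_equal; ring. Qed.
Lemma r2b2_P b s d t : r2b2 b (P s d t) = vadd (r2b2 b s) (vscale t (r2 d)).
Proof. destruct s as [[] [] [] []], d as [[] [] [] []]; unfold P, r2b2, vsub, vadd, vscale, st_add, st_scale; simpl; f_equal; ring. Qed.
Lemma cst0 w : w = vadd w (vscale 0 w).
Proof. destruct w; unfold vadd, vscale; simpl; f_equal; ring. Qed.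

Lemma Drho s d : 0 < rho s -> is_derive (fun t => rho (P s d t)) 0 (vdot (rrel s) (rrel d) / rho s).
Proof. intros H. eapply is_derive_ext; [intro t; unfold rho; rewrite rrel_P; reflexivity|].
  apply D_norm; auto. Qed.
Lemma Drho1 b s d : 0 < rho1b1 b s -> is_derive (fun t => rho1b1 b (P s d t)) 0 (vdot (r1b1 b s) (r1 d) / rho1b1 b s).
Proof. intros H. eapply is_derive_ext; [intro t; unfold rho1b1; rewrite r1b1_P; reflexivity|].
  apply D_norm; auto. Qed.
Lemma Drho2 b s d : 0 < rho2b2 b s -> is_derive (fun t => rho2b2 b (P s d t)) 0 (vdot (r2b2 b s) (r2 d) / rho2b2 b s).
Proof. intros H. eapply is_derive_ext; [intro t; unfold rho2b2; rewrite r2b2_P; reflexivity|].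
  apply D_norm; auto. Qed.

Lemma P0 s d : P s d 0 = s.
Proof. assert (V0 : forall w v, vadd w (vscale 0 v) = w) by (intros [] []; unfold vadd, vscale; simpl; f_equal; ring).
  destruct s, d; unfold P, st_add, st_scale; simpl; rewrite !V0; reflexivity. Qed.

Lemma Dquot (N Dn : R -> R) (n' d' : R) : 0 < Dn 0 ->
  is_derive (fun t => N t) 0 n' -> is_derive (fun t => Dn t) 0 d' ->
  is_derive (fun t => N t / Dn t) 0 ((n' * Dn 0 - N 0 * d') / Dn 0 ^ 2).
Proof. intros H H1 H2. apply is_derive_div; auto. lra. Qed.

Lemma Dxbar1 s d : 0 < rho s -> is_derive (fun t => xbar1 (P s d t)) 0
  (((vdot (x1 s) (rrel d) + vdot (x1 d) (rrel s)) * rho s - vdot (x1 s) (rrel s) * (vdot (rrel s) (rrel d) / rho s)) / rho s ^ 2).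
Proof. intros H. unfold xbar1.
  assert (Hd := Dquot (fun t => vdot (x1 (P s d t)) (rrel (P s d t))) (fun t => rho (P s d t))
     (vdot (x1 s) (rrel d) + vdot (x1 d) (rrel s))).
  cbv beta in Hd; rewrite !P0 in Hd. apply Hd; auto.
  - eapply is_derive_ext; [intro t; rewrite rrel_P; reflexivity|]. apply D_dot.
  - apply Drho; auto.
Qed.

Lemma D_dotn u v w z : is_derive (fun t => - vdot (vadd u (vscale t v)) (vadd w (vscale t z))) 0 (-(vdot u z + vdot v w)).
Proof. destruct u,v,w,z; unfold vdot,vadd,vscale; simpl. auto_derive. easy. ring. Qed.
Lemma D_dotc u v w : is_derive (fun t => vdot (vadd u (vscale t v)) w) 0 (vdot v w).
Proof. destruct u,v,w; unfold vdot,vadd,vscale; simpl. auto_derive. easy. ring. Qed.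

Lemma Dxbar2 s d : 0 < rho s -> is_derive (fun t => xbar2 (P s d t)) 0
  ((-(vdot (x2 s) (rrel d) + vdot (x2 d) (rrel s)) * rho s - (- vdot (x2 s) (rrel s)) * (vdot (rrel s) (rrel d) / rho s)) / rho s ^ 2).
Proof. intros H. unfold xbar2.
  assert (Hd := Dquot (fun t => - vdot (x2 (P s d t)) (rrel (P s d t))) (fun t => rho (P s d t))
     (-(vdot (x2 s) (rrel d) + vdot (x2 d) (rrel s)))).
  cbv beta in Hd; rewrite !P0 in Hd. apply Hd; auto.
  - eapply is_derive_ext; [intro t; rewrite rrel_P; reflexivity|]. apply D_dotn.
  - apply Drho; auto.
Qed.

Lemma Dxbar1b1 b s d : 0 < rho1b1 b s -> is_derive (fun t => xbar1b1 b (P s d t)) 0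
  (((vdot (x1 s) (r1 d) + vdot (x1 d) (r1b1 b s)) * rho1b1 b s - vdot (x1 s) (r1b1 b s) * (vdot (r1b1 b s) (r1 d) / rho1b1 b s)) / rho1b1 b s ^ 2).
Proof. intros H. unfold xbar1b1.
  assert (Hd := Dquot (fun t => vdot (x1 (P s d t)) (r1b1 b (P s d t))) (fun t => rho1b1 b (P s d t))
     (vdot (x1 s) (r1 d) + vdot (x1 d) (r1b1 b s))).
  cbv beta in Hd; rewrite !P0 in Hd. apply Hd; auto.
  - eapply is_derive_ext; [intro t; rewrite r1b1_P; reflexivity|]. apply D_dot.
  - apply Drho1; auto.
Qed.

Lemma Dxbar2b2 b s d : 0 < rho2b2 b s -> is_derive (fun t => xbar2b2 b (P s d t)) 0
  (((vdot (x2 s) (r2 d) + vdot (x2 d) (r2b2 b s)) * rho2b2 b s - vdot (x2 s) (r2b2 b s) * (vdot (r2b2 b s) (r2 d) / rho2b2 b s)) / rho2b2 b s ^ 2).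
Proof. intros H. unfold xbar2b2.
  assert (Hd := Dquot (fun t => vdot (x2 (P s d t)) (r2b2 b (P s d t))) (fun t => rho2b2 b (P s d t))
     (vdot (x2 s) (r2 d) + vdot (x2 d) (r2b2 b s))).
  cbv beta in Hd; rewrite !P0 in Hd. apply Hd; auto.
  - eapply is_derive_ext; [intro t; rewrite r2b2_P; reflexivity|]. apply D_dot.
  - apply Drho2; auto.
Qed.

Lemma Dxtilde s d : is_derive (fun t => xtilde (P s d t)) 0 (vdot (x1 s) (x2 d) + vdot (x1 d) (x2 s)).
Proof. unfold xtilde. apply D_dot. Qed.
Lemma Drhat1 b s d : is_derive (fun t => rhat1 b (P s d t)) 0 (vdot (r1 d) (bhat b)).
Proof. unfold rhat1. apply D_dotc. Qed.
Lemma Drhat2 b s d : is_derive (fun t => rhat2 b (P s d t)) 0 (vdot (r2 d) (bhat b)).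
Proof. unfold rhat2. apply D_dotc. Qed.
Lemma Dxhat1 b s d : is_derive (fun t => xhat1 b (P s d t)) 0 (vdot (x1 d) (bhat b)).
Proof. unfold xhat1. apply D_dotc. Qed.
Lemma Dxhat2 b s d : is_derive (fun t => xhat2 b (P s d t)) 0 (vdot (x2 d) (bhat b)).
Proof. unfold xhat2. apply D_dotc. Qed.

Lemma bhat0 w : vdot w (bhat 0) = 0.
Proof. destruct w; unfold bhat, rb1, rb2, vdot, vsub; simpl; ring. Qed.

Lemma vdot_addl u v w : vdot (vadd u v) w = vdot u w + vdot v w.
Proof. destruct u,v,w; unfold vdot, vadd; simpl; ring. Qed.
Lemma vdot_addr u v w : vdot w (vadd u v) = vdot w u + vdot w v.
Proof. destruct u,v,w; unfold vdot, vadd; simpl; ring. Qed.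
Lemma vdot_subl u v w : vdot (vsub u v) w = vdot u w - vdot v w.
Proof. destruct u,v,w; unfold vdot, vsub; simpl; ring. Qed.
Lemma vdot_subr u v w : vdot w (vsub u v) = vdot w u - vdot w v.
Proof. destruct u,v,w; unfold vdot, vsub; simpl; ring. Qed.
Lemma vdot_scalel c u w : vdot (vscale c u) w = c * vdot u w.
Proof. destruct u,w; unfold vdot, vscale; simpl; ring. Qed.
Lemma vdot_scaler c u w : vdot w (vscale c u) = c * vdot w u.
Proof. destruct u,w; unfold vdot, vscale; simpl; ring. Qed.
Lemma vdot_comm u w : vdot u w = vdot w u.
Proof. destruct u,w; unfold vdot; simpl; ring. Qed.
Lemma vdot_ge0 u : 0 <= vdot u u.
Proof. destruct u; unfold vdot; simpl; nra. Qed.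
Lemma norm_sq u : vdot u u = vnorm u * vnorm u.
Proof. unfold vnorm. rewrite sqrt_sqrt; auto using vdot_ge0. Qed.
Lemma r1b1_0 s : r1b1 0 s = r1 s.
Proof. destruct s as [p q u v]; destruct p; unfold r1b1, rb1, vsub; simpl; f_equal; ring. Qed.
Lemma r2b2_0 s : r2b2 0 s = r2 s.
Proof. destruct s as [p q u v]; destruct q; unfold r2b2, rb2, vsub; simpl; f_equal; ring. Qed.
Lemma unit_eq u w : vdot u u = 1 -> vdot w w = 1 -> vdot u w = 1 -> u = w.
Proof. destruct u as [a b c], w as [d e f]; unfold vdot; simpl; intros H1 H2 H3.
  assert (E: (a-d)^2 + (b-e)^2 + (c-f)^2 = (a*a+b*b+c*c) + (d*d+e*e+f*f) - 2*(a*d+b*e+c*f)) by ring.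
  rewrite H1, H2, H3 in E. pose proof (pow2_ge_0 (a-d)). pose proof (pow2_ge_0 (b-e)). pose proof (pow2_ge_0 (c-f)).
  assert (G4 : (a-d)^2 = 0) by lra. assert (G5 : (b-e)^2 = 0) by lra. assert (G6 : (c-f)^2 = 0) by lra.
  assert (a - d = 0) by (apply Rsqr_0_uniq; unfold Rsqr; lra). assert (b - e = 0) by (apply Rsqr_0_uniq; unfold Rsqr; lra). assert (c - f = 0) by (apply Rsqr_0_uniq; unfold Rsqr; lra). f_equal; lra. Qed.

Lemma div0 x y : x / y = 0 -> y <> 0 -> x = 0.
Proof. intros H Hy. replace x with (x / y * y) by (field; auto). rewrite H; ring. Qed.

Lemma forward mu lambda a s (Hmu : 0 < mu) (Hl0 : 0 < lambda) (Hl1 : lambda < 1) :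
  circling_equilibrium 0 mu lambda a 0 s ->
  a < 0 /\ xbar1 s = 0 /\ xbar2 s = 0 /\
     xbar1b1 0 s = 0 /\ xbar2b2 0 s = 0 /\
     xtilde s = -1 /\
     rho s = 2 / ((1 - lambda) * mu * (- a)) /\
     rho1b1 0 s = rho2b2 0 s.
Proof.
  intros [Hx1 [Hx2 [Hr [Hr1 [Hr2 Hall]]]]].
  assert (Hin : forall f, deriv_vanishes 0 mu lambda a 0 f s -> deriv_vanishes 0 mu lambda a 0 f s) by auto.
  set (F := field 0 mu lambda a 0 s) in *.
  assert (E1 := uniq0 _ _ (Hall xbar1 ltac:(unfold shape_vars; simpl; intuition)) (Dxbar1 s F Hr)).
  assert (E2 := uniq0 _ _ (Hall xbar2 ltac:(unfold shape_vars; simpl; intuition)) (Dxbar2 s F Hr)).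
  assert (E3 := uniq0 _ _ (Hall (xbar1b1 0) ltac:(unfold shape_vars; simpl; intuition)) (Dxbar1b1 0 s F Hr1)).
  assert (E4 := uniq0 _ _ (Hall (xbar2b2 0) ltac:(unfold shape_vars; simpl; intuition)) (Dxbar2b2 0 s F Hr2)).
  assert (E5 := uniq0 _ _ (Hall xtilde ltac:(unfold shape_vars; simpl; intuition)) (Dxtilde s F)).
  assert (E6 := uniq0 _ _ (Hall rho ltac:(unfold shape_vars; simpl; intuition)) (Drho s F Hr)).
  assert (E7 := uniq0 _ _ (Hall (rho1b1 0) ltac:(unfold shape_vars; simpl; intuition)) (Drho1 0 s F Hr1)).
  assert (E8 := uniq0 _ _ (Hall (rho2b2 0) ltac:(unfold shape_vars; simpl; intuition)) (Drho2 0 s F Hr2)).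
  clear Hall Hin.
  change (rrel F) with (vsub (x1 s) (x2 s)) in *.
  change (r1 F) with (x1 s) in *. change (r2 F) with (x2 s) in *.
  unfold F, field in *. cbn [x1 x2] in *.
  rewrite ?r1b1_0, ?r2b2_0 in *.
  repeat progress rewrite ?vdot_addl, ?vdot_addr, ?vdot_subl, ?vdot_subr, ?vdot_scalel, ?vdot_scaler in *.
  assert (Hrr := norm_sq (rrel s)). fold (rho s) in Hrr.
  assert (H11 := norm_sq (x1 s)). rewrite Hx1 in H11.
  assert (H22 := norm_sq (x2 s)). rewrite Hx2 in H22.
  assert (Hc : vdot (x1 s) (rrel s) = xbar1 s * rho s) by (unfold xbar1; field; lra).
  assert (Hc2 : vdot (x2 s) (rrel s) = - xbar2 s * rho s) by (unfold xbar2; field; lra).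
  assert (Hc1 : vdot (x1 s) (r1 s) = xbar1b1 0 s * rho1b1 0 s) by (unfold xbar1b1; rewrite r1b1_0; field; lra).
  assert (Hc3 : vdot (x2 s) (r2 s) = xbar2b2 0 s * rho2b2 0 s) by (unfold xbar2b2; rewrite r2b2_0; field; lra).
  rewrite ?(vdot_comm (rrel s) (x1 s)), ?(vdot_comm (rrel s) (x2 s)), ?(vdot_comm (r1 s) (x1 s)), ?(vdot_comm (r2 s) (x2 s)),
    ?(vdot_comm (x2 s) (x1 s)), ?(vdot_comm (r1 s) (rrel s)), ?(vdot_comm (r2 s) (rrel s)) in *.
  rewrite ?(vdot_comm (rrel s) (x1 s)), ?(vdot_comm (rrel s) (x2 s)), ?(vdot_comm (r1 s) (x1 s)), ?(vdot_comm (r2 s) (x2 s)),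
    ?(vdot_comm (x2 s) (x1 s)), ?(vdot_comm (r1 s) (rrel s)), ?(vdot_comm (r2 s) (rrel s)) in *.
  rewrite ?Hc, ?Hc2, ?Hc1, ?Hc3, ?Hrr, ?H11, ?H22 in *.
  set (c := xbar1 s) in *. set (c2 := xbar2 s) in *. set (c1 := xbar1b1 0 s) in *. set (c3 := xbar2b2 0 s) in *.
  set (rh := rho s) in *. set (rh1 := rho1b1 0 s) in *. set (rh2 := rho2b2 0 s) in *.
  set (X := vdot (x1 s) (x2 s)) in *.
  assert (Hc1z : c1 = 0) by (replace c1 with (c1*rh1/rh1) by (field; lra); exact E7).
  assert (Hc3z : c3 = 0) by (replace c3 with (c3*rh2/rh2) by (field; lra); exact E8).
  assert (Hc2z : c2 = - c) by (assert (c*rh + c2*rh = 0) by (apply (div0 _ rh); [etransitivity; [|exact E6]; field; lra | lra]); nra).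
  rewrite Hc1z, Hc3z, Hc2z in *.
  set (p := vdot (rrel s) (r1 s)) in *. set (q := vdot (rrel s) (r2 s)) in *.
  assert (HK : 0 < (1 - lambda) * mu) by nra.
  assert (T1 : 1 - X - (1-lambda)*mu*(c-a)*rh*(1-c^2) = 0)
    by (apply (div0 _ rh); [etransitivity; [|exact E1]; field; lra | lra]).
  assert (T2 : 1 - X + (1-lambda)*mu*(c+a)*rh*(1-c^2) = 0)
    by (apply (div0 _ rh); [etransitivity; [|exact E2]; field; lra | lra]).
  assert (T3 : 1 - (1-lambda)*mu*(c-a)*p/rh = 0)
    by (apply (div0 _ rh1); [etransitivity; [|exact E3]; field; lra | lra]).
  assert (T4 : 1 - (1-lambda)*mu*(c+a)*q/rh = 0)
    by (apply (div0 _ rh2); [etransitivity; [|exact E4]; field; lra | lra]).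
  assert (T5 : 2*((1-lambda)*mu)*(c^2*(X-1)) = 0)
    by (etransitivity; [|exact E5]; field; lra).
  assert (Hcz : c = 0).
  { apply Rmult_integral in T5 as [T5|T5]; [lra|].
    apply Rmult_integral in T5 as [T5|T5].
    - rewrite <- Rsqr_pow2 in T5. apply Rsqr_0_uniq; exact T5.
    - assert (Hx12 : x1 s = x2 s) by (apply unit_eq; [lra|lra|unfold X in T5; lra]).
      assert (A1 : vdot (x2 s) (r1 s) = 0) by (rewrite <- Hx12, Hc1; ring).
      assert (A2 : vdot (x2 s) (rrel s) = 0) by (unfold rrel; rewrite vdot_subr; fold (rrel s); rewrite A1, Hc3; ring).
      rewrite Hc2 in A2. nra. }
  rewrite Hcz in *.
  assert (Hpq : p - q = rh * rh) by (rewrite <- Hrr; unfold p, q; change (vdot (rrel s) (rrel s)) with (vdot (rrel s) (vsub (r1 s) (r2 s))); rewrite vdot_subr; ring).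
  assert (Hrh : (1-lambda)*mu*a*rh = -2).
  { assert (Z : (1-lambda)*mu*a*(p-q)/rh = -2) .
    { assert (Z : (1-lambda)*mu*a*(p-q)/rh = (1 - (1-lambda)*mu*(0-a)*p/rh) + (1 - (1-lambda)*mu*(0+a)*q/rh) - 2) by (field; lra).
      rewrite Z, T3, T4; ring. }
    rewrite Hpq in Z. rewrite <- Z. field. lra. }
  assert (Hp : 0 < (1-lambda)*mu*rh) by (apply Rmult_lt_0_compat; lra).
  assert (Ha : a < 0) by nra.
  split; [exact Ha|]. split; [reflexivity|]. split; [ring|]. split; [reflexivity|]. split; [reflexivity|].
  split; [change (X = -1); nra|]. assert (Hna : (1-lambda)*mu*(-a) <> 0) by nra.
  split; [replace (2 / ((1-lambda)*mu*(-a))) with (rh*((1-lambda)*mu*(-a)) / ((1-lambda)*mu*(-a))) by (f_equal; nra); field; repeat split; nra|].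
  assert (Hpq2 : p + q = 0).
  { assert (Z : (1-lambda)*mu*a*(p+q)/rh = (1 - (1-lambda)*mu*(0-a)*p/rh) - (1 - (1-lambda)*mu*(0+a)*q/rh)) by (field; lra).
    rewrite T3, T4 in Z. assert (Z2 : (1-lambda)*mu*a*(p+q) = 0) by (apply (div0 _ rh); [rewrite Z; ring | lra]).
    apply Rmult_integral in Z2 as [Z2|Z2]; [nra | exact Z2]. }
  assert (Hn1 : vdot (r1 s) (r1 s) = rh1 * rh1) by (unfold rh1, rho1b1; rewrite r1b1_0; apply norm_sq).
  assert (Hn2 : vdot (r2 s) (r2 s) = rh2 * rh2) by (unfold rh2, rho2b2; rewrite r2b2_0; apply norm_sq).
  assert (Hpq3 : p + q = vdot (r1 s) (r1 s) - vdot (r2 s) (r2 s)).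
  { unfold p, q, rrel. rewrite !vdot_subl, (vdot_comm (r2 s) (r1 s)). ring. }
  nra.
Qed.

Lemma der0 (F : R -> R) D : is_derive F 0 D -> D = 0 -> derivable_pt_lim F 0 0.
Proof. intros H HD. subst. apply is_derive_Reals. exact H. Qed.

Lemma sqrt_sq' x y : 0 <= x -> y = x * x -> sqrt y = x.
Proof. intros H ->. apply sqrt_square; exact H. Qed.

Lemma exist_eq mu lambda a (Hmu : 0 < mu) (Hl0 : 0 < lambda) (Hl1 : lambda < 1) (Ha : a < 0) :
  exists s, circling_equilibrium 0 mu lambda a 0 s.
Proof.
  set (d := 2 / ((1 - lambda) * mu * (-a))).
  assert (Hd : 0 < d) by (unfold d; apply Rdiv_lt_0_compat; [lra| apply Rmult_lt_0_compat; [nra|lra]]).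
  set (s0 := mkState (mkV3 (d/2) 0 0) (mkV3 (-(d/2)) 0 0) (mkV3 0 1 0) (mkV3 0 (-1) 0)).
  assert (Hrho : rho s0 = d) by (apply sqrt_sq'; [lra | unfold vdot, rrel, vsub; simpl; field]).
  assert (Hrho1 : rho1b1 0 s0 = d/2) by (apply sqrt_sq'; [lra | unfold vdot, r1b1, rb1, vsub; simpl; field]).
  assert (Hrho2 : rho2b2 0 s0 = d/2) by (apply sqrt_sq'; [lra | unfold vdot, r2b2, rb2, vsub; simpl; field]).
  assert (Hx1 : xbar1 s0 = 0) by (unfold xbar1; rewrite Hrho; unfold vdot, rrel, vsub; simpl; field; lra).
  assert (Hx2 : xbar2 s0 = 0) by (unfold xbar2; rewrite Hrho; unfold vdot, rrel, vsub; simpl; field; lra).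
  assert (Hx3 : xbar1b1 0 s0 = 0) by (unfold xbar1b1; rewrite Hrho1; unfold vdot, r1b1, rb1, vsub; simpl; field; lra).
  assert (Hx4 : xbar2b2 0 s0 = 0) by (unfold xbar2b2; rewrite Hrho2; unfold vdot, r2b2, rb2, vsub; simpl; field; lra).
  exists s0. unfold circling_equilibrium.
  split; [apply sqrt_sq'; [lra| unfold vdot; simpl; ring]|].
  split; [apply sqrt_sq'; [lra| unfold vdot; simpl; ring]|].
  split; [lra|]. split; [lra|]. split; [lra|].
  intros f Hf. unfold shape_vars in Hf; simpl in Hf.
  assert (Hr : 0 < rho s0) by lra. assert (Hr1 : 0 < rho1b1 0 s0) by lra. assert (Hr2 : 0 < rho2b2 0 s0) by lra.
  set (F := field 0 mu lambda a 0 s0).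
  assert (HF : F = mkState (mkV3 0 1 0) (mkV3 0 (-1) 0)
       (mkV3 ((1-lambda)*mu*a*(1/d) *d) 0 0) (mkV3 (-((1-lambda)*mu*a*(1/d)*d)) 0 0)).
  { unfold F, field. rewrite Hrho, Hrho1, Hrho2, Hx1, Hx2, Hx3, Hx4. unfold s0, vadd, vscale, vsub, rrel, r1b1, r2b2, rb1, rb2; simpl.
    f_equal; f_equal; field; lra. }
  unfold deriv_vanishes. change (field 0 mu lambda a 0 s0) with F.
  assert (Hna : a <> 0) by lra. assert (Hmn : mu <> 0) by lra. assert (Hln : 1 - lambda <> 0) by lra.
  repeat destruct Hf as [<-|Hf]; try contradiction.
  1: eapply der0; [apply (Dxbar1 s0 F Hr)|].
  2: eapply der0; [apply (Dxbar2 s0 F Hr)|].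
  3: eapply der0; [apply (Dxbar1b1 0 s0 F Hr1)|].
  4: eapply der0; [apply (Dxbar2b2 0 s0 F Hr2)|].
  5: eapply der0; [apply (Dxtilde s0 F)|].
  6: eapply der0; [apply (Drho s0 F Hr)|].
  7: eapply der0; [apply (Drho1 0 s0 F Hr1)|].
  8: eapply der0; [apply (Drho2 0 s0 F Hr2)|].
  9: eapply der0; [apply (Drhat1 0 s0 F)|].
  10: eapply der0; [apply (Drhat2 0 s0 F)|].
  11: eapply der0; [apply (Dxhat1 0 s0 F)|].
  12: eapply der0; [apply (Dxhat2 0 s0 F)|].
  all: rewrite ?bhat0; try reflexivity.
  all: rewrite HF, ?Hrho, ?Hrho1, ?Hrho2; unfold s0, vdot, vadd, vscale, vsub, rrel, r1b1, r2b2, rb1, rb2; simpl.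
  all: unfold d; field; repeat split; auto.
Qed.

Theorem proposition4p1 (mu lambda a : R)
  (Hmu : 0 < mu) (Hl0 : 0 < lambda) (Hl1 : lambda < 1)
  (Ha0 : -1 <= a) (Ha1 : a <= 1) :
  ((exists s : State, circling_equilibrium 0 mu lambda a 0 s) <-> a < 0) /\
  (forall s : State, circling_equilibrium 0 mu lambda a 0 s ->
     xbar1 s = 0 /\ xbar2 s = 0 /\
     xbar1b1 0 s = 0 /\ xbar2b2 0 s = 0 /\
     xtilde s = -1 /\
     rho s = 2 / ((1 - lambda) * mu * (- a)) /\
     rho1b1 0 s = rho2b2 0 s).
Proof.
  split.
  - split.
    + intros [s Hs]. apply (forward mu lambda a s Hmu Hl0 Hl1 Hs).
    + intros Ha. apply exist_eq; auto.
  - intros s Hs. apply (forward mu lambda a s Hmu Hl0 Hl1 Hs).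
Qed.
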